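(* Assume (C), (I) and (H). Then $Q^*\in\mathcal Q$ is a weak equilibrium if and only if $\Gamma^{Q^*}_i(Q^*_i)\ge\Gamma^{Q^*}_i(Q_i)$ for all $i\in S$ and all $Q\in\mathcal Q$.
   Context: Let $S=\{1,\dots,N\}$, $N\in\mathbb N$. For $i\in S$ let $E_i=\{q=(q_1,\dots,q_N)\in\mathbb R^N: q_j\ge0\text{ for }j\ne i,\ q_i=-\sum_{j\ne i}q_j\}$ and let $D_i\subseteq E_i$ be given. Let $\mathcal Q=\{Q\in\mathbb R^{N\times N}: Q_i\in D_i\ \forall i\in S\}$, where $Q_i$ is the $i$-th row of $Q$. For $Q\in\mathcal Q$, $X=(X_t)_{t\ge0}$ is a time-homogeneous continuous-time Markov chain on $S$ with generator $Q$, and $\mathbb E_{i,Q}$ is the expectation given $X_0=i$. A payoff function $f$ assigns a real number $f(t,i,\mathbf q)$ to each $t\ge0$, $i\in S$, $\mathbf q\in D_i$. Conditions: (C) $t\mapsto f(t,i,\mathbf q)$ is continuous on $[0,\infty)$ for each $i,\mathbf q$; (I) $\int_0^\infty\sup_{i\in S,\mathbf q\in D_i,\|\mathbf q\|\le c}|f(t,i,\mathbf q)|\,dt<\infty$ for every $c>0$; (H) there is a nonnegative function $h(t,\varepsilon;i,\mathbf q)$ with $|f(t+\varepsilon,i,\mathbf q)-f(t,i,\mathbf q)|\le h(t,\varepsilon;i,\mathbf q)$ for all $t\ge0,\varepsilon>0,i,\mathbf q$, $h$ nondecreasing in $\varepsilon$, $\lim_{\varepsilon\downarrow0}h=0$,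 and $\int_0^\infty h(t,\varepsilon;i,\mathbf q)dt<\infty$ for small $\varepsilon>0$. Define $F(i,Q)=\mathbb E_{i,Q}[\int_0^\infty f(t,X_t,Q_{X_t})dt]$ and $F(Q)=(F(1,Q),\dots,F(N,Q))$. For $Q,Q'\in\mathcal Q$, $\varepsilon>0$, $Q\otimes_\varepsilon Q'$ means $X$ evolves with generator $Q$ on $[0,\varepsilon]$ and $Q'$ on $(\varepsilon,\infty)$, and $F(i,Q\otimes_\varepsilon Q')$ is the corresponding expected payoff $\mathbb E_i[\int_0^\varepsilon f(t,X_t,Q_{X_t})dt+\int_\varepsilon^\infty f(t,X_t,Q'_{X_t})dt]$. $Q^*\in\mathcal Q$ is a weak equilibrium if $\liminf_{\varepsilon\downarrow0}\varepsilon^{-1}(F(i,Q^* )-F(i,Q\otimes_\varepsilon Q^* ))\ge0$ for all $Q\in\mathcal Q$, $i\in S$. For $Q^*\in\mathcal Q$, $i\in S$, $\mathbf q\in D_i$, $\Gamma^{Q^*}_i(\mathbf q)=f(0,i,\mathbf q)+\mathbf q\cdot F(Q^* )$. *)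

(* Defs.v *)
From Stdlib Require Import Reals Lra ClassicalEpsilon Factorial.
Open Scope R_scope.

(* States S = {1..N} are encoded as 0..N-1; vectors in R^N and N x N
   matrices are encoded as functions on nat (entries outside 0..N-1 unused). *)

Fixpoint sumR (n : nat) (g : nat -> R) : R :=
  match n with O => 0 | S m => sumR m g + g m end.

Definition row (Q : nat -> nat -> R) (i : nat) : nat -> R := fun j => Q i j.

Definition inE (N i : nat) (q : nat -> R) : Prop :=
  (forall j, (j < N)%nat -> j <> i -> 0 <= q j) /\
  q i = - sumR N (fun j => if Nat.eqb j i then 0 else q j) /\
  (forall j, (N <= j)%nat -> q j = 0).

Definition inQ (N : nat) (D : nat -> (nat -> R) -> Prop) (Q : nat -> nat -> R) : Prop :=
  forall i, (i < N)%nat -> D i (row Q i).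

Definition norm1 (N : nat) (q : nat -> R) : R := sumR N (fun j => Rabs (q j)).

Definition matmul (N : nat) (A B : nat -> nat -> R) : nat -> nat -> R :=
  fun i j => sumR N (fun k => A i k * B k j).

Fixpoint matpow (N : nat) (Q : nat -> nat -> R) (n : nat) : nat -> nat -> R :=
  match n with
  | O => fun i j => if Nat.eqb i j then 1 else 0
  | S m => matmul N (matpow N Q m) Q
  end.

(* transition matrix of the CTMC with generator Q: P(t) = exp(tQ),
   P_{ij}(t) = P_i(X_t = j) *)
Definition trans (N : nat) (Q : nat -> nat -> R) (t : R) (i j : nat) : R :=
  epsilon (inhabits 0)
    (fun l => infinite_sum (fun n => t ^ n / INR (fact n) * matpow N Q n i j) l).

(* Riemann integral over [a,b] (the integrands used below are Riemann integrable) *)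
Definition RInt (g : R -> R) (a b : R) : R :=
  epsilon (inhabits 0) (fun l => exists pr : Riemann_integrable g a b, RiemannInt pr = l).

Definition int_from (a : R) (g : R -> R) : R :=
  epsilon (inhabits 0) (fun l => forall eps, 0 < eps ->
     exists T0, forall T, T0 <= T -> Rabs (RInt g a T - l) < eps).

(* An extended-real function u on [0,oo) is described by its strict
   subgraph E t r  <->  r < u t.
   lint_finite G: the lower (Riemann) integral over [0,oo) of the function
   described by G is finite. *)
Definition lint_finite (G : R -> R -> Prop) : Prop :=
  exists M, forall (T : R) (phi : R -> R) (pr : Riemann_integrable phi 0 T),
    0 <= T -> (forall t r, 0 <= t <= T -> r < phi t -> G t r) ->
    RiemannInt pr <= M.

(* "int_0^oo u(t) dt < oo" (Lebesgue): u admits a lower semicontinuous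
   majorant with finite integral (Vitali-Caratheodory); for lsc g the
   Lebesgue integral equals the lower Riemann integral. *)
Definition int_finite (E : R -> R -> Prop) : Prop :=
  exists G : R -> R -> Prop,
    (forall t r r', r' <= r -> G t r -> G t r') /\
    (forall t r, 0 <= t -> G t r ->
       exists d, 0 < d /\ forall t', 0 <= t' -> Rabs (t' - t) < d -> G t' r) /\
    (forall t r, 0 <= t -> E t r -> G t r) /\
    lint_finite G.

Section Payoff.
Variables (N : nat) (D : nat -> (nat -> R) -> Prop)
          (f : R -> nat -> (nat -> R) -> R).

Definition condC : Prop :=
  forall i q, (i < N)%nat -> D i q ->
    forall t0, 0 <= t0 -> forall eps, 0 < eps -> exists d, 0 < d /\
      forall t, 0 <= t -> Rabs (t - t0) < d -> Rabs (f t i q - f t0 i q) < eps.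

Definition condI : Prop :=
  forall c, 0 < c ->
    int_finite (fun t r => exists i q, (i < N)%nat /\ D i q /\ norm1 N q <= c /\
                                       r < Rabs (f t i q)).

Definition condH : Prop :=
  exists h : R -> R -> nat -> (nat -> R) -> R,
    forall i q, (i < N)%nat -> D i q ->
      (forall t eps, 0 <= t -> 0 < eps -> 0 <= h t eps i q) /\
      (forall t eps, 0 <= t -> 0 < eps ->
          Rabs (f (t + eps) i q - f t i q) <= h t eps i q) /\
      (forall t e1 e2, 0 <= t -> 0 < e1 -> e1 <= e2 -> h t e1 i q <= h t e2 i q) /\
      (forall t, 0 <= t -> forall d, 0 < d -> exists e0, 0 < e0 /\
          forall eps, 0 < eps < e0 -> Rabs (h t eps i q) < d) /\
      (exists e0, 0 < e0 /\ forall eps, 0 < eps < e0 ->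
          int_finite (fun t r => r < h t eps i q)).

(* F(i,Q) = E_{i,Q}[ int_0^oo f(t, X_t, Q_{X_t}) dt ] *)
Definition Fval (Q : nat -> nat -> R) (i : nat) : R :=
  int_from 0 (fun t => sumR N (fun j => trans N Q t i j * f t j (row Q j))).

Definition Fcomp (Q Q' : nat -> nat -> R) (eps : R) (i : nat) : R :=
  RInt (fun t => sumR N (fun j => trans N Q t i j * f t j (row Q j))) 0 eps +
  int_from eps (fun t => sumR N (fun j =>
      sumR N (fun k => trans N Q eps i k * trans N Q' (t - eps) k j) * f t j (row Q' j))).

(* weak equilibrium: liminf_{eps -> 0+} (F(i,Qs) - F(i,Q (x)_eps Qs))/eps >= 0 *)
Definition weak_equilibrium (Qs : nat -> nat -> R) : Prop :=
  forall Q i, inQ N D Q -> (i < N)%nat ->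
    forall delta, 0 < delta -> exists eta, 0 < eta /\
      forall eps, 0 < eps < eta -> - delta <= (Fval Qs i - Fcomp Q Qs eps i) / eps.

Definition Gamma (Qs : nat -> nat -> R) (i : nat) (q : nat -> R) : R :=
  f 0 i q + sumR N (fun j => q j * Fval Qs j).

End Payoff.

(* Main.v *)
Require Import Defs.
From Stdlib Require Import Reals Lra Lia ClassicalEpsilon Factorial.
From Coquelicot Require Import Coquelicot.
Open Scope R_scope.
Notation Cb := Binomial.C.


Lemma sumR_ext n g h : (forall k, (k < n)%nat -> g k = h k) -> sumR n g = sumR n h.
Proof. induction n; simpl; intros H; auto. rewrite IHn; [rewrite H|]; auto; intros; apply H; lia. Qed.

Lemma sumR_plus n g h : sumR n (fun k => g k + h k) = sumR n g + sumR n h.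
Proof. induction n; simpl; [lra|]. rewrite IHn; lra. Qed.

Lemma sumR_minus n g h : sumR n (fun k => g k - h k) = sumR n g - sumR n h.
Proof. induction n; simpl; [lra|]. rewrite IHn; lra. Qed.

Lemma sumR_scal n c g : sumR n (fun k => c * g k) = c * sumR n g.
Proof. induction n; simpl; [lra|]. rewrite IHn; lra. Qed.

Lemma sumR_scal_r n c g : sumR n (fun k => g k * c) = sumR n g * c.
Proof. induction n; simpl; [lra|]. rewrite IHn; lra. Qed.

Lemma sumR_zero n : sumR n (fun _ => 0) = 0.
Proof. induction n; simpl; [lra|]. rewrite IHn; lra. Qed.

Lemma sumR_swap n m g : sumR n (fun k => sumR m (fun l => g k l)) = sumR m (fun l => sumR n (fun k => g k l)).
Proof.
  induction n; simpl. { rewrite sumR_zero; auto. }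
  rewrite IHn, <- sumR_plus. auto.
Qed.

Lemma sumR_le n g h : (forall k, (k < n)%nat -> g k <= h k) -> sumR n g <= sumR n h.
Proof. induction n; simpl; intros H; [lra|]. apply Rplus_le_compat; [apply IHn; intros; apply H; lia| apply H; lia]. Qed.

Lemma sumR_nonneg n g : (forall k, (k < n)%nat -> 0 <= g k) -> 0 <= sumR n g.
Proof. intros H. rewrite <- (sumR_zero n). apply sumR_le; auto. Qed.

Lemma sumR_abs n g : Rabs (sumR n g) <= sumR n (fun k => Rabs (g k)).
Proof. induction n; simpl. rewrite Rabs_R0; lra. eapply Rle_trans. apply Rabs_triang. lra. Qed.

Lemma sumR_shift n g : sumR (S n) g = g O + sumR n (fun k => g (S k)).
Proof. induction n; simpl in *. lra. rewrite IHn. lra. Qed.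

Lemma sumR_delta n g j : (j < n)%nat -> sumR n (fun k => g k * (if Nat.eqb k j then 1 else 0)) = g j.
Proof.
  induction n; intros Hj; [lia|]. simpl.
  destruct (Nat.eq_dec j n).
  - subst. rewrite Nat.eqb_refl. rewrite (sumR_ext _ _ (fun _ => 0)). rewrite sumR_zero. lra.
    intros k Hk. destruct (Nat.eqb_spec k n); [lia|]. lra.
  - rewrite IHn by lia. destruct (Nat.eqb_spec n j); [lia|]. lra.
Qed.

Lemma sumR_delta_l n g j : (j < n)%nat -> sumR n (fun k => (if Nat.eqb j k then 1 else 0) * g k) = g j.
Proof.
  intros Hj. rewrite <- (sumR_delta n g j Hj). apply sumR_ext. intros k _.
  destruct (Nat.eqb_spec j k), (Nat.eqb_spec k j); try lia; lra.
Qed.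

Lemma sum_f_R0_sumR g n : sum_f_R0 g n = sumR (S n) g.
Proof. induction n; simpl in *. lra. rewrite IHn. auto. Qed.

Lemma sumR_max n (h : nat -> R) : (0 < n)%nat -> exists j, (j < n)%nat /\ forall k, (k < n)%nat -> h k <= h j.
Proof.
  induction n; intros Hn; [lia|].
  destruct n. exists O. split; auto. intros k Hk. assert (k = O) by lia. subst; lra.
  destruct IHn as [j [Hj Hm]]; [lia|].
  destruct (Rle_dec (h (S n)) (h j)).
  - exists j. split; [lia|]. intros k Hk. destruct (Nat.eq_dec k (S n)); [subst; auto|]. apply Hm; lia.
  - exists (S n). split; [lia|]. intros k Hk. destruct (Nat.eq_dec k (S n)); [subst; lra|].
    specialize (Hm k ltac:(lia)). lra.
Qed.


Definition delta (i j : nat) : R := if Nat.eqb i j then 1 else 0.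

Lemma matpow0 N Q i j : matpow N Q 0 i j = delta i j.
Proof. reflexivity. Qed.

Lemma matmul_assoc N A B Cm i j :
  matmul N (matmul N A B) Cm i j = matmul N A (matmul N B Cm) i j.
Proof.
  unfold matmul.
  transitivity (sumR N (fun k => sumR N (fun l => A i l * B l k * Cm k j))).
  - apply sumR_ext; intros. rewrite <- sumR_scal_r. auto.
  - rewrite sumR_swap. apply sumR_ext; intros. rewrite <- sumR_scal. apply sumR_ext; intros. ring.
Qed.

Lemma matmul_id_r N A i j : (j < N)%nat -> matmul N A (matpow N A 0) i j = A i j.
Proof. intros. unfold matmul. simpl. apply sumR_delta; auto. Qed.

Lemma matmul_ext_l N A A' B i j : (forall k, (k < N)%nat -> A i k = A' i k) ->
  matmul N A B i j = matmul N A' B i j.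
Proof. intros H. unfold matmul. apply sumR_ext. intros k Hk. rewrite H; auto. Qed.

Lemma matpow_add N Q m n i j : (j < N)%nat ->
  matmul N (matpow N Q m) (matpow N Q n) i j = matpow N Q (m + n) i j.
Proof.
  revert i j. induction n; intros i j Hj.
  - rewrite Nat.add_0_r. unfold matmul. simpl. apply sumR_delta; auto.
  - rewrite Nat.add_succ_r.
    change (matmul N (matpow N Q m) (matmul N (matpow N Q n) Q) i j = matmul N (matpow N Q (m + n)) Q i j).
    rewrite <- matmul_assoc.
    apply matmul_ext_l. intros. apply IHn; auto.
Qed.

Definition mbound N (A : nat -> nat -> R) := sumR N (fun k => sumR N (fun j => Rabs (A k j))).

Lemma mbound_ge0 N A : 0 <= mbound N A.
Proof. apply sumR_nonneg; intros; apply sumR_nonneg; intros; apply Rabs_pos. Qed.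

Lemma sumR_single n g k : (k < n)%nat -> (forall l, 0 <= g l) -> g k <= sumR n g.
Proof.
  induction n; intros Hk Hg; [lia|]. simpl. destruct (Nat.eq_dec k n).
  - subst. assert (0 <= sumR n g) by (apply sumR_nonneg; auto). lra.
  - assert (g k <= sumR n g) by (apply IHn; auto; lia). specialize (Hg n). lra.
Qed.

Lemma matpow_bound N A n i j : (j < N)%nat -> Rabs (matpow N A n i j) <= (mbound N A) ^ n.
Proof.
  revert i j. induction n; intros i j Hj.
  - simpl. destruct (Nat.eqb i j); rewrite ?Rabs_R1, ?Rabs_R0; lra.
  - simpl. unfold matmul. eapply Rle_trans. apply sumR_abs.
    eapply Rle_trans with (sumR N (fun k => (mbound N A)^n * Rabs (A k j))).
    + apply sumR_le. intros k Hk. rewrite Rabs_mult. apply Rmult_le_compat_r. apply Rabs_pos. apply IHn; auto.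
    + rewrite sumR_scal. rewrite Rmult_comm. apply Rmult_le_compat_r.
      apply pow_le, mbound_ge0.
      unfold mbound. apply sumR_le. intros k Hk.
      apply (sumR_single N (fun j0 => Rabs (A k j0)) j Hj). intros; apply Rabs_pos.
Qed.

Definition cI (c : R) : nat -> nat -> R := fun i j => if Nat.eqb i j then c else 0.

Lemma matpow_cI N c n i j : (j < N)%nat -> matpow N (cI c) n i j = c ^ n * delta i j.
Proof.
  revert i j. induction n; intros i j Hj.
  - simpl. unfold delta. ring.
  - simpl. unfold matmul. rewrite (sumR_ext _ _ (fun k => (c^n * delta i k) * cI c k j)).
    2:{ intros; rewrite IHn; auto. }
    unfold cI, delta. destruct (Nat.eqb_spec i j).
    + subst. rewrite (sumR_ext _ _ (fun k => (c ^ n * c) * (if Nat.eqb k j then 1 else 0))).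
      rewrite sumR_scal. pose proof (sumR_delta N (fun _ => 1) j Hj) as HH. assert (sumR N (fun k => if Nat.eqb k j then 1 else 0) = 1) as H1 by (etransitivity; [|exact HH]; apply sumR_ext; intros; ring). rewrite H1; ring.
      intros k _. destruct (Nat.eqb_spec j k), (Nat.eqb_spec k j); subst; try lia; ring.
    + rewrite (sumR_ext _ _ (fun _ => 0)). rewrite sumR_zero; ring.
      intros k _. destruct (Nat.eqb_spec i k), (Nat.eqb_spec k j); subst; try lia; ring.
Qed.

Lemma binom_step (u : nat -> R) c n :
  sumR (S n) (fun m => Cb n m * c^(n-m) * u (S m)) + c * sumR (S n) (fun m => Cb n m * c^(n-m) * u m)
  = sumR (S (S n)) (fun m => Cb (S n) m * c^(S n - m) * u m).
Proof.
  rewrite (sumR_shift (S n) (fun m => Cb (S n) m * c^(S n - m) * u m)).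
  rewrite (sumR_shift n (fun m => Cb n m * c^(n-m) * u m)).
  simpl (sumR (S n) (fun m => Cb n m * c^(n-m) * u (S m))).
  change (sumR (S n) (fun k => Cb (S n) (S k) * c ^ (S n - S k) * u (S k))) with
    (sumR n (fun k => Cb (S n) (S k) * c ^ (S n - S k) * u (S k)) + Cb (S n) (S n) * c ^ (S n - S n) * u (S n)).
  rewrite (sumR_ext n (fun k => Cb (S n) (S k) * c ^ (S n - S k) * u (S k))
     (fun k => Cb n k * c^(n-k) * u (S k) + Cb n (S k) * c^(n-k) * u (S k))).
  2:{ intros k Hk. rewrite <- pascal by auto. simpl (S n - S k)%nat. ring. }
  rewrite sumR_plus.
  rewrite Rmult_plus_distr_l, <- sumR_scal.
  rewrite (sumR_ext n (fun k => c * (Cb n (S k) * c ^ (n - S k) * u (S k)))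
       (fun k => Cb n (S k) * c^(n-k) * u (S k))).
  2:{ intros k Hk. replace (n - k)%nat with (S (n - S k)) by lia. simpl. ring. }
  rewrite !C_n_0, !C_n_n. rewrite !Nat.sub_diag, !Nat.sub_0_r. simpl. set (cn := c ^ n). ring.
Qed.

Definition addcI (Q : nat -> nat -> R) c : nat -> nat -> R := fun i j => Q i j + cI c i j.

Lemma matpow_binom N Q c n i j : (j < N)%nat ->
  matpow N (addcI Q c) n i j = sumR (S n) (fun m => Cb n m * c^(n-m) * matpow N Q m i j).
Proof.
  revert i j. induction n; intros i j Hj.
  - simpl. rewrite C_n_0. simpl. ring.
  - rewrite <- binom_step. simpl matpow at 1. unfold matmul.
    rewrite (sumR_ext _ _ (fun k => sumR (S n) (fun m => Cb n m * c ^ (n - m) * matpow N Q m i k) * Q k j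
       + sumR (S n) (fun m => Cb n m * c ^ (n - m) * matpow N Q m i k) * cI c k j)).
    2:{ intros k Hk. rewrite IHn by auto. unfold addcI. ring. }
    rewrite sumR_plus. f_equal.
    + rewrite (sumR_ext _ _ (fun k => sumR (S n) (fun m => Cb n m * c ^ (n - m) * (matpow N Q m i k * Q k j)))).
      2:{ intros. rewrite <- sumR_scal_r. apply sumR_ext. intros. ring. }
      rewrite sumR_swap. apply sumR_ext. intros m _. rewrite sumR_scal. simpl. unfold matmul. auto.
    + unfold cI. rewrite (sumR_ext _ _ (fun k => (c * sumR (S n) (fun m => Cb n m * c ^ (n - m) * matpow N Q m i k)) * (if Nat.eqb k j then 1 else 0))).
      rewrite sumR_delta; auto.
      intros k _. destruct (Nat.eqb_spec k j); ring.
Qed.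

Lemma matpow_nonneg N A n i j : (forall k l, (k < N)%nat -> (l < N)%nat -> 0 <= A k l) ->
  (j < N)%nat -> 0 <= matpow N A n i j.
Proof.
  intros HA. revert i j. induction n; intros i j Hj.
  - simpl. destruct (Nat.eqb i j); lra.
  - simpl. unfold matmul. apply sumR_nonneg. intros k Hk. apply Rmult_le_pos; auto.
Qed.

Lemma matpow_rowsum N Q n i : (i < N)%nat -> (forall k, (k < N)%nat -> sumR N (fun j => Q k j) = 0) ->
  sumR N (fun j => matpow N Q n i j) = match n with O => 1 | S _ => 0 end.
Proof.
  intros Hi HQ. destruct n.
  - simpl. rewrite (sumR_ext _ _ (fun j => 1 * (if Nat.eqb j i then 1 else 0))).
    apply sumR_delta; auto. intros j _. destruct (Nat.eqb_spec i j), (Nat.eqb_spec j i); subst; try lia; ring.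
  - simpl. unfold matmul. rewrite sumR_swap.
    rewrite (sumR_ext _ _ (fun k => matpow N Q n i k * 0)). rewrite sumR_scal_r. ring.
    intros k Hk. rewrite sumR_scal. rewrite HQ; auto.
Qed.


Lemma exp_series x : infinite_sum (fun n => x ^ n / INR (fact n)) (exp x).
Proof.
  apply is_series_Reals. generalize (is_exp_Reals x). unfold is_pseries. apply is_series_ext.
  intros n. rewrite pow_n_pow. unfold scal; simpl. unfold mult; simpl. unfold Rdiv. ring.
Qed.

Lemma term_le_sum a l n : (forall m, 0 <= a m) -> infinite_sum a l -> a n <= l.
Proof.
  intros Ha H. apply is_series_Reals in H. unfold is_series in H.
  assert (Hl : is_lim_seq (sum_n a) l) by exact H.
  apply (Rle_trans _ (sum_n a n)).
  - destruct n. rewrite sum_O. lra. rewrite sum_Sn. unfold plus; simpl.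
    assert (0 <= sum_n a n). { rewrite sum_n_Reals. rewrite sum_f_R0_sumR. apply sumR_nonneg; auto. }
    lra.
  - apply (is_lim_seq_incr_compare (sum_n a) l Hl). intros m. rewrite sum_Sn. unfold plus; simpl.
    specialize (Ha (S m)); lra.
Qed.

Lemma sum_nonneg_lim a l : (forall m, 0 <= a m) -> infinite_sum a l -> 0 <= l.
Proof. intros Ha H. apply (Rle_trans _ (a O)); auto. apply term_le_sum; auto. Qed.

Definition coef N A i j : nat -> R := fun n => matpow N A n i j / INR (fact n).

Lemma coef_bound N A i j n x : (j < N)%nat ->
  Rabs (coef N A i j n * x ^ n) <= (mbound N A * Rabs x) ^ n / INR (fact n).
Proof.
  intros Hj. unfold coef, Rdiv. rewrite Rpow_mult_distr.
  rewrite !Rabs_mult. rewrite Rabs_inv, (Rabs_right (INR _)) by (apply Rle_ge, pos_INR).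
  rewrite <- RPow_abs.
  assert (0 < / INR (fact n)) by (apply Rinv_0_lt_compat, INR_fact_lt_0).
  assert (Rabs (matpow N A n i j) <= mbound N A ^ n) by (apply matpow_bound; auto).
  assert (0 <= Rabs x ^ n) by (apply pow_le, Rabs_pos).
  assert (0 <= Rabs (matpow N A n i j)) by apply Rabs_pos.
  apply Rle_trans with (mbound N A ^ n * / INR (fact n) * Rabs x ^ n).
  - apply Rmult_le_compat_r; auto. apply Rmult_le_compat_r; lra.
  - lra.
Qed.

Lemma cv_inf N A i j x : (j < N)%nat -> Rbar_lt (Rabs x) (CV_radius (coef N A i j)).
Proof.
  intros Hj. destruct (CV_radius_bounded (coef N A i j)) as [Hub _].
  set (r := Rabs x + 1).
  assert (Hr : Rbar_le r (CV_radius (coef N A i j))).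
  { apply Hub. exists (exp (mbound N A * Rabs r)). intros n.
    eapply Rle_trans. apply coef_bound; auto.
    apply (term_le_sum (fun n => (mbound N A * Rabs r) ^ n / INR (fact n))).
    - intros m. apply Rmult_le_pos. apply pow_le. apply Rmult_le_pos. apply mbound_ge0. apply Rabs_pos.
      left; apply Rinv_0_lt_compat, INR_fact_lt_0.
    - apply exp_series. }
  destruct (CV_radius (coef N A i j)); simpl in *; auto. unfold r in Hr. lra.
Qed.

Lemma trans_series N A t i j : (j < N)%nat ->
  infinite_sum (fun n => t ^ n / INR (fact n) * matpow N A n i j) (trans N A t i j).
Proof.
  intros Hj. unfold trans. apply epsilon_spec.
  exists (PSeries (coef N A i j) t).
  apply is_series_Reals.
  generalize (PSeries_correct _ _ (CV_radius_inside _ _ (cv_inf N A i j t Hj))).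
  unfold is_pseries. apply is_series_ext. intros n. rewrite pow_n_pow. unfold scal; simpl.
  unfold mult; simpl. unfold coef, Rdiv. ring.
Qed.

Lemma trans_PSeries N A t i j : (j < N)%nat -> trans N A t i j = PSeries (coef N A i j) t.
Proof.
  intros Hj. apply (uniqueness_sum (fun n => t ^ n / INR (fact n) * matpow N A n i j)).
  apply trans_series; auto.
  apply is_series_Reals.
  generalize (PSeries_correct _ _ (CV_radius_inside _ _ (cv_inf N A i j t Hj))).
  unfold is_pseries. apply is_series_ext. intros n. rewrite pow_n_pow. unfold scal; simpl.
  unfold mult; simpl. unfold coef, Rdiv. ring.
Qed.

Lemma trans_cont N A i j t : (j < N)%nat -> continuity_pt (fun s => trans N A s i j) t.
Proof.
  intros Hj. apply continuity_pt_ext with (PSeries (coef N A i j)).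
  intros; rewrite trans_PSeries; auto.
  apply PSeries_continuity. apply cv_inf; auto.
Qed.

Lemma trans_0 N A i j : (j < N)%nat -> trans N A 0 i j = delta i j.
Proof.
  intros Hj. rewrite trans_PSeries; auto. rewrite PSeries_0. unfold coef. simpl. unfold delta. lra.
Qed.

Lemma trans_deriv0 N A i j : (i < N)%nat -> (j < N)%nat ->
  derivable_pt_lim (fun s => trans N A s i j) 0 (A i j).
Proof.
  intros Hi Hj. apply is_derive_Reals.
  apply (is_derive_ext (PSeries (coef N A i j))). intros; rewrite trans_PSeries; auto.
  replace (A i j) with (PSeries (PS_derive (coef N A i j)) 0).
  apply is_derive_PSeries. apply cv_inf; auto.
  rewrite PSeries_0. unfold PS_derive, coef. simpl. unfold matmul.
  rewrite (sumR_delta_l N (fun k => A k j)); auto. field.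
Qed.


Lemma isum_ext a b l : (forall n, a n = b n) -> infinite_sum a l -> infinite_sum b l.
Proof. intros H H1. apply is_series_Reals. apply is_series_Reals in H1. revert H1. apply is_series_ext; auto. Qed.

Lemma isum_zero : infinite_sum (fun _ => 0) 0.
Proof. intros e He. exists O. intros n _. rewrite sum_f_R0_sumR, sumR_zero. unfold Rdist. rewrite Rminus_0_r, Rabs_R0. lra. Qed.

Lemma isum_plus a b la lb : infinite_sum a la -> infinite_sum b lb -> infinite_sum (fun n => a n + b n) (la + lb).
Proof.
  intros Ha Hb. apply is_series_Reals in Ha, Hb. apply is_series_Reals.
  exact (is_series_plus _ _ _ _ Ha Hb).
Qed.

Lemma isum_scal c a l : infinite_sum a l -> infinite_sum (fun n => c * a n) (c * l).
Proof.
  intros Ha. apply is_series_Reals in Ha. apply is_series_Reals.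
  exact (is_series_scal c _ _ Ha).
Qed.

Lemma isum_sumR n (u : nat -> nat -> R) l : (forall k, (k < n)%nat -> infinite_sum (u k) (l k)) ->
  infinite_sum (fun m => sumR n (fun k => u k m)) (sumR n l).
Proof.
  induction n; intros H; simpl. apply isum_zero.
  apply isum_plus. apply IHn; intros; apply H; lia. apply H; lia.
Qed.

Lemma exp_term_abs N A s i k : (k < N)%nat ->
  ex_series (fun m => Rabs (s ^ m / INR (fact m) * matpow N A m i k)).
Proof.
  intros Hk. apply (@ex_series_le R_AbsRing R_CompleteNormedModule _ (fun m => (mbound N A * Rabs s) ^ m / INR (fact m))).
  - intros n. change (norm (Rabs (s ^ n / INR (fact n) * matpow N A n i k))) with
      (Rabs (Rabs (s ^ n / INR (fact n) * matpow N A n i k))).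
    rewrite Rabs_Rabsolu.
    replace (s ^ n / INR (fact n) * matpow N A n i k) with (coef N A i k n * s ^ n)
      by (unfold coef, Rdiv; ring).
    apply coef_bound; auto.
  - exists (exp (mbound N A * Rabs s)). apply is_series_Reals. apply exp_series.
Qed.

Lemma cauchy_mat N A B s t i j : (j < N)%nat ->
  infinite_sum (fun n => sum_f_R0 (fun m => (s ^ m / INR (fact m)) * (t ^ (n - m) / INR (fact (n - m)))
       * matmul N (matpow N A m) (matpow N B (n - m)) i j) n)
    (sumR N (fun k => trans N A s i k * trans N B t k j)).
Proof.
  intros Hj.
  assert (H : forall k, (k < N)%nat -> infinite_sum
    (fun n => sum_f_R0 (fun m => (s ^ m / INR (fact m) * matpow N A m i k) *
                                 (t ^ (n - m) / INR (fact (n - m)) * matpow N B (n - m) k j)) n)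
    (trans N A s i k * trans N B t k j)).
  { intros k Hk. apply is_series_Reals.
    apply (is_series_mult (fun m => s ^ m / INR (fact m) * matpow N A m i k)
                          (fun m => t ^ m / INR (fact m) * matpow N B m k j)).
    - apply is_series_Reals, trans_series; auto.
    - apply is_series_Reals, trans_series; auto.
    - apply exp_term_abs; auto.
    - apply exp_term_abs; auto. }
  generalize (isum_sumR N _ _ H). apply isum_ext. intros n.
  rewrite (sumR_ext N _ (fun k => sumR (S n) (fun m => (s ^ m / INR (fact m) * matpow N A m i k) *
                                 (t ^ (n - m) / INR (fact (n - m)) * matpow N B (n - m) k j)))).
  2:{ intros; apply sum_f_R0_sumR. }
  rewrite sumR_swap, sum_f_R0_sumR. apply sumR_ext. intros m _.
  unfold matmul. rewrite <- sumR_scal. apply sumR_ext. intros; ring.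
Qed.

Lemma coef_binom n m s t : (m <= n)%nat ->
  s ^ m / INR (fact m) * (t ^ (n - m) / INR (fact (n - m))) = Cb n m * s ^ m * t ^ (n - m) / INR (fact n).
Proof.
  intros Hm. unfold Binomial.C.
  assert (INR (fact m) <> 0) by apply INR_fact_neq_0.
  assert (INR (fact (n - m)) <> 0) by apply INR_fact_neq_0.
  assert (INR (fact n) <> 0) by apply INR_fact_neq_0.
  field. auto.
Qed.

Lemma trans_semigroup N Q s t i j : (j < N)%nat ->
  trans N Q (s + t) i j = sumR N (fun k => trans N Q s i k * trans N Q t k j).
Proof.
  intros Hj. apply (uniqueness_sum (fun n => (s + t) ^ n / INR (fact n) * matpow N Q n i j)).
  apply trans_series; auto.
  generalize (cauchy_mat N Q Q s t i j Hj). apply isum_ext. intros n.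
  rewrite binomial. rewrite !sum_f_R0_sumR.
  rewrite (sumR_ext _ _ (fun m => (Cb n m * s ^ m * t ^ (n - m)) * (matpow N Q n i j / INR (fact n)))).
  - rewrite sumR_scal_r. unfold Rdiv. ring.
  - intros m Hm. rewrite matpow_add by auto. replace (m + (n - m))%nat with n by lia.
    rewrite coef_binom by lia. unfold Rdiv. ring.
Qed.

Lemma trans_cI N c t k j : (j < N)%nat -> trans N (cI c) t k j = exp (c * t) * delta k j.
Proof.
  intros Hj. apply (uniqueness_sum (fun n => t ^ n / INR (fact n) * matpow N (cI c) n k j)).
  apply trans_series; auto.
  rewrite Rmult_comm. apply (isum_ext (fun n => delta k j * ((c * t) ^ n / INR (fact n)))).
  intros n. rewrite matpow_cI by auto. rewrite Rpow_mult_distr. unfold Rdiv. ring.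
  apply isum_scal. apply exp_series.
Qed.

Lemma trans_shift N Q c t i j : (j < N)%nat ->
  exp (c * t) * trans N Q t i j = trans N (addcI Q c) t i j.
Proof.
  intros Hj. apply (uniqueness_sum (fun n => t ^ n / INR (fact n) * matpow N (addcI Q c) n i j)).
  2: apply trans_series; auto.
  replace (exp (c * t) * trans N Q t i j) with (sumR N (fun k => trans N Q t i k * trans N (cI c) t k j)).
  - generalize (cauchy_mat N Q (cI c) t t i j Hj). apply isum_ext. intros n.
    rewrite matpow_binom by auto. rewrite sum_f_R0_sumR.
    rewrite <- sumR_scal. apply sumR_ext. intros m Hm.
    rewrite coef_binom by lia.
    unfold matmul. rewrite (sumR_ext _ _ (fun k => (c ^ (n - m)) * (matpow N Q m i k * delta k j))).
    2:{ intros. rewrite matpow_cI by auto. ring. }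
    rewrite sumR_scal. unfold delta. rewrite sumR_delta by auto.
    assert (Ht : t ^ m * t ^ (n - m) = t ^ n) by (rewrite <- pow_add; f_equal; lia).
    rewrite Rmult_assoc with (r1 := Cb n m), Ht. unfold Rdiv. ring.
  - rewrite (sumR_ext _ _ (fun k => (exp (c * t) * trans N Q t i k) * (if Nat.eqb k j then 1 else 0))).
    rewrite sumR_delta; auto.
    intros k _. rewrite trans_cI by auto. unfold delta. ring.
Qed.


Definition gen N Q := forall k, (k < N)%nat -> inE N k (row Q k).

Lemma sumR_split_k n g k : (k < n)%nat ->
  sumR n g = sumR n (fun j => if Nat.eqb j k then 0 else g j) + g k.
Proof.
  induction n; intros Hk; [lia|]. simpl. destruct (Nat.eq_dec k n).
  - subst. rewrite Nat.eqb_refl. rewrite (sumR_ext n (fun j => if Nat.eqb j n then 0 else g j) g). lra.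
    intros j Hj. destruct (Nat.eqb_spec j n); [lia|auto].
  - rewrite IHn by lia. destruct (Nat.eqb_spec n k); [lia|]. lra.
Qed.

Lemma gen_rowsum N Q k : gen N Q -> (k < N)%nat -> sumR N (fun j => Q k j) = 0.
Proof.
  intros HG Hk. destruct (HG k Hk) as [_ [H2 _]]. unfold row in H2.
  rewrite (sumR_split_k N _ k Hk). rewrite H2. lra.
Qed.

Lemma gen_trans_nonneg N Q t i j : gen N Q -> 0 <= t -> (j < N)%nat -> 0 <= trans N Q t i j.
Proof.
  intros HG Ht Hj.
  set (c := sumR N (fun k => Rabs (Q k k))).
  assert (HB : forall k l, (k < N)%nat -> (l < N)%nat -> 0 <= addcI Q c k l).
  { intros k l Hk Hl. unfold addcI, cI. destruct (Nat.eqb_spec k l).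
    - subst. assert (Rabs (Q l l) <= c). { apply (sumR_single N (fun k => Rabs (Q k k))); auto. intros; apply Rabs_pos. }
      assert (- Q l l <= Rabs (Q l l)) by (rewrite <- Rabs_Ropp; apply RRle_abs). lra.
    - destruct (HG k Hk) as [H1 _]. specialize (H1 l Hl ltac:(auto)). unfold row in H1. lra. }
  assert (H0 : 0 <= trans N (addcI Q c) t i j).
  { apply (sum_nonneg_lim (fun n => t ^ n / INR (fact n) * matpow N (addcI Q c) n i j)).
    - intros m. apply Rmult_le_pos. apply Rmult_le_pos. apply pow_le; auto. left; apply Rinv_0_lt_compat, INR_fact_lt_0.
      apply matpow_nonneg; auto.
    - apply trans_series; auto. }
  rewrite <- trans_shift in H0 by auto.
  assert (0 < exp (c * t)) by apply exp_pos.
  destruct (Rle_lt_dec 0 (trans N Q t i j)); auto.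
  assert (exp (c * t) * trans N Q t i j < 0). { apply Rmult_pos_neg; auto. } lra.
Qed.

Lemma gen_trans_rowsum N Q t i : gen N Q -> (i < N)%nat -> sumR N (fun j => trans N Q t i j) = 1.
Proof.
  intros HG Hi.
  apply (uniqueness_sum (fun n => sumR N (fun j => t ^ n / INR (fact n) * matpow N Q n i j))).
  - apply isum_sumR. intros; apply trans_series; auto.
  - intros e He. exists O. intros n _. rewrite sum_f_R0_sumR. rewrite sumR_shift.
    rewrite sumR_scal. rewrite matpow_rowsum; auto.
    2:{ intros; apply gen_rowsum; auto. }
    rewrite (sumR_ext n _ (fun _ => 0)). rewrite sumR_zero. unfold Rdist. simpl.
    replace (1 / 1 * 1 + 0 - 1) with 0 by field. rewrite Rabs_R0; lra.
    intros k _. rewrite sumR_scal. rewrite matpow_rowsum; auto. ring.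
    intros; apply gen_rowsum; auto.
Qed.

Lemma sumR_single_lt n g k : (k < n)%nat -> (forall l, (l < n)%nat -> 0 <= g l) -> g k <= sumR n g.
Proof.
  induction n; intros Hk Hg; [lia|]. simpl. destruct (Nat.eq_dec k n).
  - subst. assert (0 <= sumR n g) by (apply sumR_nonneg; intros; apply Hg; lia). lra.
  - assert (g k <= sumR n g) by (apply IHn; [lia| intros; apply Hg; lia]). specialize (Hg n ltac:(lia)). lra.
Qed.

Lemma gen_trans_le1 N Q t i j : gen N Q -> 0 <= t -> (i < N)%nat -> (j < N)%nat -> trans N Q t i j <= 1.
Proof.
  intros HG Ht Hi Hj. rewrite <- (gen_trans_rowsum N Q t i HG Hi).
  apply (sumR_single_lt N (fun j => trans N Q t i j)); auto.
  intros l Hl. apply gen_trans_nonneg; auto.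
Qed.


Lemma cplus (g h : R -> R) x : continuous g x -> continuous h x -> continuous (fun t => g t + h t) x.
Proof. intros. exact (continuous_plus g h x H H0). Qed.
Lemma cmult (g h : R -> R) x : continuous g x -> continuous h x -> continuous (fun t => g t * h t) x.
Proof. intros. exact (continuous_mult g h x H H0). Qed.
Lemma cminus (g h : R -> R) x : continuous g x -> continuous h x -> continuous (fun t => g t - h t) x.
Proof. intros. exact (continuous_minus g h x H H0). Qed.
Lemma cconst (c : R) x : continuous (fun _ : R => c) x.
Proof. apply continuous_const. Qed.
Lemma cabs (g : R -> R) x : continuous g x -> continuous (fun t => Rabs (g t)) x.
Proof. apply continuous_Rabs_comp. Qed.
Lemma Rmax0_eq a : (a + Rabs a) / 2 = Rmax a 0.
Proof.
  unfold Rmax. destruct (Rle_dec a 0).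
  + rewrite Rabs_left1 by auto. field.
  + rewrite Rabs_right by lra. field.
Qed.
Lemma cmax0 (g : R -> R) x : continuous g x -> continuous (fun t => Rmax (g t) 0) x.
Proof.
  intros H. apply (continuous_ext (fun t => (g t + Rabs (g t)) / 2)).
  - intros t. apply Rmax0_eq.
  - apply (continuous_ext (fun t => (g t + Rabs (g t)) * / 2)). intros; reflexivity.
    apply cmult. apply cplus; auto. apply cabs; auto. apply cconst.
Qed.
Lemma csumR n (g : nat -> R -> R) x : (forall k, (k < n)%nat -> continuous (g k) x) ->
  continuous (fun t => sumR n (fun k => g k t)) x.
Proof.
  induction n; intros H; simpl. apply cconst.
  apply cplus. apply IHn; intros; apply H; lia. apply H; lia.
Qed.
Lemma cont_pt (g : R -> R) x : continuity_pt g x -> continuous g x.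
Proof. intros H. apply continuity_pt_filterlim. auto. Qed.
Lemma cshift (g : R -> R) e x : continuous g (x - e) -> continuous (fun t => g (t - e)) x.
Proof.
  intros H. apply (continuous_comp (fun t => t - e) g). apply cminus. apply continuous_id. apply cconst. auto.
Qed.

Lemma RInt_Defs g a b : ex_RInt g a b -> Defs.RInt g a b = RInt g a b.
Proof.
  intros H. pose proof (ex_RInt_Reals_0 _ _ _ H) as pr.
  unfold Defs.RInt.
  assert (Hs : exists l, exists pr0 : Riemann_integrable g a b, RiemannInt pr0 = l) by (exists (RiemannInt pr); exists pr; auto).
  destruct (epsilon_spec (inhabits 0) _ Hs) as [pr' Hpr'].
  rewrite <- Hpr'. rewrite (RInt_Reals g a b pr'). auto.
Qed.

Definition HL (a : R) (g : R -> R) (l : R) : Prop :=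
  forall e, 0 < e -> exists T0, forall T, T0 <= T -> Rabs (Defs.RInt g a T - l) < e.

Lemma HL_unique a g l1 l2 : HL a g l1 -> HL a g l2 -> l1 = l2.
Proof.
  intros H1 H2. destruct (Req_dec l1 l2) as [|Hne]; auto.
  set (e := Rabs (l1 - l2) / 2).
  assert (He : 0 < e) by (unfold e; apply Rdiv_lt_0_compat; [apply Rabs_pos_lt; lra| lra]).
  destruct (H1 e He) as [T1 HT1]. destruct (H2 e He) as [T2 HT2].
  specialize (HT1 (Rmax T1 T2) (Rmax_l _ _)). specialize (HT2 (Rmax T1 T2) (Rmax_r _ _)).
  set (v := Defs.RInt g a (Rmax T1 T2)) in *.
  assert (Rabs (l1 - l2) <= Rabs (v - l1) + Rabs (v - l2)).
  { replace (l1 - l2) with (-(v - l1) + (v - l2)) by ring. eapply Rle_trans. apply Rabs_triang. rewrite Rabs_Ropp. lra. }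
  unfold e in *. lra.
Qed.

Lemma int_from_HL a g l : HL a g l -> int_from a g = l.
Proof.
  intros H. unfold int_from.
  assert (Hs : exists l0, forall eps, 0 < eps -> exists T0, forall T, T0 <= T -> Rabs (Defs.RInt g a T - l0) < eps) by (exists l; exact H).
  pose proof (epsilon_spec (inhabits 0) _ Hs) as H'.
  apply (HL_unique a g); auto.
Qed.

Lemma mono_lim (F : R -> R) a M : (forall T1 T2, a <= T1 -> T1 <= T2 -> F T1 <= F T2) ->
  (forall T, a <= T -> F T <= M) ->
  exists l, forall e, 0 < e -> exists T0, forall T, T0 <= T -> Rabs (F T - l) < e.
Proof.
  intros Hm Hb.
  set (E := fun x => exists T, a <= T /\ x = F T).
  assert (HE1 : bound E) by (exists M; intros x [T [HT ->]]; auto).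
  assert (HE2 : exists x, E x) by (exists (F a); exists a; split; [lra|auto]).
  destruct (completeness E HE1 HE2) as [l [Hub Hlub]].
  exists l. intros e He.
  assert (exists T, a <= T /\ l - e < F T) as [T1 [HT1 HF1]].
  { apply Classical_Prop.NNPP. intros Hn. assert (l <= l - e); [|lra].
    apply Hlub. intros x [T [HT ->]]. apply Rnot_lt_le. intros Hc. apply Hn. exists T; split; auto. }
  exists T1. intros T HT.
  assert (F T1 <= F T) by (apply Hm; auto).
  assert (F T <= l) by (apply Hub; exists T; split; [lra|auto]).
  rewrite Rabs_left1 by lra. lra.
Qed.

Lemma HL_ext a g1 g2 l : (forall t, a <= t -> g1 t = g2 t) -> (forall T, a <= T -> ex_RInt g2 a T) ->
  HL a g2 l -> HL a g1 l.
Proof.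
  intros He Hi H e Hep. destruct (H e Hep) as [T0 HT]. exists (Rmax T0 a). intros T HT'.
  assert (a <= T) by (eapply Rle_trans; [apply Rmax_r|eauto]).
  assert (Hx : forall x, Rmin a T < x < Rmax a T -> g2 x = g1 x).
  { intros x Hx. rewrite Rmin_left, Rmax_right in Hx by auto. symmetry; apply He; lra. }
  assert (ex_RInt g1 a T) by (apply (ex_RInt_ext g2); auto).
  rewrite RInt_Defs by auto. rewrite <- (RInt_ext g2 g1) by auto.
  rewrite <- RInt_Defs by auto. apply HT. eapply Rle_trans; [apply Rmax_l|eauto].
Qed.

Lemma HL_plus a g1 g2 l1 l2 : (forall T, ex_RInt g1 a T) -> (forall T, ex_RInt g2 a T) ->
  HL a g1 l1 -> HL a g2 l2 -> HL a (fun t => g1 t + g2 t) (l1 + l2).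
Proof.
  intros I1 I2 H1 H2 e He. destruct (H1 (e/2)) as [T1 HT1]; [lra|]. destruct (H2 (e/2)) as [T2 HT2]; [lra|].
  exists (Rmax T1 T2). intros T HT.
  rewrite RInt_Defs by (apply (ex_RInt_plus g1 g2); auto).
  rewrite (RInt_plus g1 g2) by auto. unfold plus; simpl.
  specialize (HT1 T ltac:(eapply Rle_trans; [apply Rmax_l|eauto])).
  specialize (HT2 T ltac:(eapply Rle_trans; [apply Rmax_r|eauto])).
  rewrite RInt_Defs in HT1, HT2 by auto.
  replace (RInt g1 a T + RInt g2 a T - (l1 + l2)) with ((RInt g1 a T - l1) + (RInt g2 a T - l2)) by ring.
  eapply Rle_lt_trans. apply Rabs_triang. lra.
Qed.

Lemma HL_scal a g c l : (forall T, ex_RInt g a T) -> HL a g l -> HL a (fun t => c * g t) (c * l).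
Proof.
  intros I H e He. destruct (H (e / (Rabs c + 1))) as [T0 HT].
  { apply Rdiv_lt_0_compat; auto. generalize (Rabs_pos c); lra. }
  exists T0. intros T HT'. specialize (HT T HT').
  rewrite RInt_Defs by (apply (ex_RInt_scal g); auto).
  rewrite RInt_Defs in HT by auto.
  rewrite (RInt_scal g) by auto. unfold scal; simpl; unfold mult; simpl.
  replace (c * RInt g a T - c * l) with (c * (RInt g a T - l)) by ring.
  rewrite Rabs_mult.
  assert (0 <= Rabs c) by apply Rabs_pos.
  apply Rle_lt_trans with ((Rabs c + 1) * Rabs (RInt g a T - l)).
  apply Rmult_le_compat_r. apply Rabs_pos. lra.
  assert (Hp : 0 < Rabs c + 1) by lra.
  apply (Rmult_lt_compat_l (Rabs c + 1)) in HT; auto.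
  replace ((Rabs c + 1) * (e / (Rabs c + 1))) with e in HT by (field; lra). auto.
Qed.

Lemma ex_RInt_sumR n (g : nat -> R -> R) a b : (forall k, (k < n)%nat -> ex_RInt (g k) a b) ->
  ex_RInt (fun t => sumR n (fun k => g k t)) a b.
Proof.
  induction n; intros H; simpl. apply ex_RInt_const.
  apply (ex_RInt_plus (fun t => sumR n (fun k => g k t)) (g n)). apply IHn; intros; apply H; lia. apply H; lia.
Qed.

Lemma RInt_sumR n (g : nat -> R -> R) a b : (forall k, (k < n)%nat -> ex_RInt (g k) a b) ->
  RInt (fun t => sumR n (fun k => g k t)) a b = sumR n (fun k => RInt (g k) a b).
Proof.
  induction n; intros H; simpl. rewrite RInt_const. unfold scal; simpl; unfold mult; simpl. ring.
  assert (H1 : ex_RInt (fun t => sumR n (fun k => g k t)) a b) by (apply ex_RInt_sumR; intros; apply H; lia).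
  assert (H2 : ex_RInt (g n) a b) by (apply H; lia).
  rewrite (RInt_plus (fun t => sumR n (fun k => g k t)) (g n)) by auto.
  unfold plus; simpl. rewrite IHn; auto.
Qed.

Lemma HL_sumR n a (g : nat -> R -> R) (c l : nat -> R) :
  (forall k, (k < n)%nat -> forall T, ex_RInt (g k) a T) ->
  (forall k, (k < n)%nat -> HL a (g k) (l k)) ->
  HL a (fun t => sumR n (fun k => c k * g k t)) (sumR n (fun k => c k * l k)).
Proof.
  induction n; intros I H; simpl.
  - intros e He. exists 0. intros T _. rewrite RInt_Defs by apply ex_RInt_const.
    rewrite RInt_const. unfold scal; simpl; unfold mult; simpl. rewrite Rmult_0_r, Rminus_0_r, Rabs_R0; auto.
  - apply (HL_plus a (fun t => sumR n (fun k => c k * g k t)) (fun t => c n * g n t)).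
    + intros T. apply ex_RInt_sumR. intros k Hk. apply (ex_RInt_scal (g k)). apply I; lia.
    + intros T. apply (ex_RInt_scal (g n)). apply I; lia.
    + apply IHn; intros; [apply I|apply H]; lia.
    + apply HL_scal. apply I; lia. apply H; lia.
Qed.

Lemma HL_split a b g l : a <= b -> (forall T, ex_RInt g a T) -> HL a g l -> HL b g (l - RInt g a b).
Proof.
  intros Hab I H e He. destruct (H e He) as [T0 HT]. exists T0. intros T HT'.
  specialize (HT T HT').
  assert (ex_RInt g b T).
  { apply (ex_RInt_Chasles g b a T). apply ex_RInt_swap. apply I. apply I. }
  rewrite RInt_Defs in * by auto.
  rewrite <- (RInt_Chasles g a b T) in HT by auto. unfold plus in HT; simpl in HT.
  replace (RInt g b T - (l - RInt g a b)) with (RInt g a b + RInt g b T - l) by ring. auto.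
Qed.

Lemma HL_diff_bound a g1 g2 l1 l2 B : HL a g1 l1 -> HL a g2 l2 ->
  (exists T1, forall T, T1 <= T -> Rabs (Defs.RInt g1 a T - Defs.RInt g2 a T) <= B) ->
  Rabs (l1 - l2) <= B.
Proof.
  intros H1 H2 [T1 HB]. apply Rnot_lt_le. intros Hc.
  set (e := (Rabs (l1 - l2) - B) / 2).
  assert (He : 0 < e) by (unfold e; lra).
  destruct (H1 e He) as [T2 HT2]. destruct (H2 e He) as [T3 HT3].
  set (T := Rmax T1 (Rmax T2 T3)).
  assert (T1 <= T) by apply Rmax_l.
  assert (T2 <= T) by (eapply Rle_trans; [apply Rmax_l|apply Rmax_r]).
  assert (T3 <= T) by (eapply Rle_trans; [apply Rmax_r|apply Rmax_r]).
  specialize (HB T ltac:(auto)). specialize (HT2 T ltac:(auto)). specialize (HT3 T ltac:(auto)).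
  set (v1 := Defs.RInt g1 a T) in *. set (v2 := Defs.RInt g2 a T) in *.
  assert (Rabs (l1 - l2) <= Rabs (v1 - l1) + Rabs (v1 - v2) + Rabs (v2 - l2)).
  { replace (l1 - l2) with (-(v1 - l1) + (v1 - v2) + (v2 - l2)) by ring.
    eapply Rle_trans. apply Rabs_triang. rewrite <- Rabs_Ropp with (x := v1 - l1).
    apply Rplus_le_compat_r. apply Rabs_triang. }
  unfold e in *. lra.
Qed.

Definition lim0 (g : R -> R) (l : R) : Prop :=
  forall e, 0 < e -> exists d, 0 < d /\ forall x, 0 < x < d -> Rabs (g x - l) < e.

Lemma lim0_ext g h l : (forall x, 0 < x -> g x = h x) -> lim0 g l -> lim0 h l.
Proof. intros E H e He. destruct (H e He) as [d [Hd Hx]]. exists d; split; auto. intros x Hx'. rewrite <- E by lra. auto. Qed.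

Lemma lim0_leq g l l' : l = l' -> lim0 g l -> lim0 g l'.
Proof. intros ->; auto. Qed.

Lemma lim0_const c : lim0 (fun _ => c) c.
Proof. intros e He. exists 1. split; [lra|]. intros. rewrite Rminus_diag_eq, Rabs_R0; auto. Qed.

Lemma lim0_id : lim0 (fun x => x) 0.
Proof. intros e He. exists e. split; auto. intros x Hx. rewrite Rminus_0_r, Rabs_right; lra. Qed.

Lemma lim0_plus g h lg lh : lim0 g lg -> lim0 h lh -> lim0 (fun x => g x + h x) (lg + lh).
Proof.
  intros Hg Hh e He. destruct (Hg (e/2)) as [d1 [Hd1 H1]]; [lra|]. destruct (Hh (e/2)) as [d2 [Hd2 H2]]; [lra|].
  exists (Rmin d1 d2). split. apply Rmin_pos; auto. intros x Hx.
  assert (x < d1) by (eapply Rlt_le_trans; [apply Hx|apply Rmin_l]).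
  assert (x < d2) by (eapply Rlt_le_trans; [apply Hx|apply Rmin_r]).
  specialize (H1 x ltac:(lra)). specialize (H2 x ltac:(lra)).
  replace (g x + h x - (lg + lh)) with ((g x - lg) + (h x - lh)) by ring.
  eapply Rle_lt_trans. apply Rabs_triang. lra.
Qed.

Lemma lim0_scal c g l : lim0 g l -> lim0 (fun x => c * g x) (c * l).
Proof.
  intros H e He. destruct (H (e / (Rabs c + 1))) as [d [Hd Hx]].
  { apply Rdiv_lt_0_compat; auto. generalize (Rabs_pos c); lra. }
  exists d. split; auto. intros x Hx'. specialize (Hx x Hx').
  replace (c * g x - c * l) with (c * (g x - l)) by ring. rewrite Rabs_mult.
  assert (0 <= Rabs c) by apply Rabs_pos.
  apply Rle_lt_trans with ((Rabs c + 1) * Rabs (g x - l)).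
  apply Rmult_le_compat_r. apply Rabs_pos. lra.
  assert (Hp : 0 < Rabs c + 1) by lra.
  apply (Rmult_lt_compat_l (Rabs c + 1)) in Hx; auto.
  replace ((Rabs c + 1) * (e / (Rabs c + 1))) with e in Hx by (field; lra). auto.
Qed.

Lemma lim0_minus g h lg lh : lim0 g lg -> lim0 h lh -> lim0 (fun x => g x - h x) (lg - lh).
Proof.
  intros Hg Hh. apply (lim0_ext (fun x => g x + (-1) * h x)). intros; ring.
  replace (lg - lh) with (lg + (-1) * lh) by ring. apply lim0_plus; auto. apply lim0_scal; auto.
Qed.

Lemma lim0_mult g h lg lh : lim0 g lg -> lim0 h lh -> lim0 (fun x => g x * h x) (lg * lh).
Proof.
  intros Hg Hh.
  (* g x * h x = (g x - lg)*(h x - lh) + lg * h x + lh * g x - lg*lh *)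
  assert (Hsmall : lim0 (fun x => (g x - lg) * (h x - lh)) 0).
  { intros e He. destruct (Hg (Rmin 1 e)) as [d1 [Hd1 H1]]. apply Rmin_pos; lra.
    destruct (Hh 1) as [d2 [Hd2 H2]]. lra.
    exists (Rmin d1 d2). split. apply Rmin_pos; auto. intros x Hx.
    assert (x < d1) by (eapply Rlt_le_trans; [apply Hx|apply Rmin_l]).
    assert (x < d2) by (eapply Rlt_le_trans; [apply Hx|apply Rmin_r]).
    specialize (H1 x ltac:(lra)). specialize (H2 x ltac:(lra)).
    rewrite Rminus_0_r, Rabs_mult.
    assert (Rmin 1 e <= e) by apply Rmin_r.
    apply Rle_lt_trans with (Rabs (g x - lg) * 1).
    apply Rmult_le_compat_l. apply Rabs_pos. lra. lra. }
  apply (lim0_ext (fun x => (g x - lg) * (h x - lh) + (lg * h x + lh * g x - lg * lh))).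
  intros; ring.
  apply (lim0_leq _ (0 + (lg * lh + lh * lg - lg * lh))); [ring|].
  apply lim0_plus; auto. apply lim0_minus. apply lim0_plus; apply lim0_scal; auto. apply lim0_const.
Qed.

Lemma lim0_sumR n (g : nat -> R -> R) (l : nat -> R) : (forall k, (k < n)%nat -> lim0 (g k) (l k)) ->
  lim0 (fun x => sumR n (fun k => g k x)) (sumR n l).
Proof.
  induction n; intros H; simpl. apply lim0_const.
  apply lim0_plus. apply IHn; intros; apply H; lia. apply H; lia.
Qed.

Lemma lim0_deriv (g : R -> R) l : derivable_pt_lim g 0 l -> lim0 (fun x => (g x - g 0) / x) l.
Proof.
  intros H e He. destruct (H e He) as [d Hd]. exists d. split. apply cond_pos.
  intros x Hx. specialize (Hd x ltac:(lra) ltac:(rewrite Rabs_right; lra)).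
  rewrite Rplus_0_l in Hd. auto.
Qed.

Lemma lim0_RInt (u : R -> R) : (forall x, continuous u x) -> lim0 (fun x => RInt u 0 x / x) (u 0).
Proof.
  intros Hc. apply (lim0_ext (fun x => (RInt u 0 x - RInt u 0 0) / x)).
  intros x _. rewrite RInt_point. unfold zero; simpl. f_equal. ring.
  apply lim0_deriv. apply is_derive_Reals.
  apply (is_derive_RInt u (fun b => RInt u 0 b) 0 0).
  - exists (mkposreal 1 Rlt_0_1). intros y _. apply (@RInt_correct R_CompleteNormedModule). apply (@ex_RInt_continuous R_CompleteNormedModule). intros; auto.
  - auto.
Qed.


Lemma exRc (g : R -> R) u v : (forall x, continuous g x) -> ex_RInt g u v.
Proof. intros H. apply (@ex_RInt_continuous R_CompleteNormedModule). intros; auto. Qed.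

Definition adm N (D : nat -> (nat -> R) -> Prop) (f : R -> nat -> (nat -> R) -> R) c t y :=
  exists j q, (j < N)%nat /\ D j q /\ norm1 N q <= c /\ y <= Rabs (f t j q).

Lemma adm_le N D f c t y y' : adm N D f c t y -> y' <= y -> adm N D f c t y'.
Proof. intros [j [q [H1 [H2 [H3 H4]]]]] H. exists j, q. repeat split; auto. lra. Qed.

Definition BND N D f c M := forall a b psi, 0 <= a <= b -> ex_RInt psi a b ->
  (forall t, a <= t <= b -> adm N D f c t (psi t)) -> RInt psi a b <= M.

Lemma BOUND N D f c : condI N D f -> 0 < c -> exists M, BND N D f c M.
Proof.
  intros hI Hc. destruct (hI c Hc) as [G [Hdown [Hlsc [HEG [M HM]]]]].
  exists M. intros a b psi [Ha Hab] Hpsi Hadm.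
  set (chi := fun t => if Rle_dec a t then psi t else 0).
  assert (H1 : ex_RInt chi 0 a).
  { apply (ex_RInt_ext (fun _ => 0)). intros x Hx. rewrite Rmin_left, Rmax_right in Hx by auto.
    unfold chi. destruct (Rle_dec a x); auto; lra. apply ex_RInt_const. }
  assert (H2 : ex_RInt chi a b).
  { apply (ex_RInt_ext psi). intros x Hx. rewrite Rmin_left, Rmax_right in Hx by auto.
    unfold chi. destruct (Rle_dec a x); auto; lra. auto. }
  assert (H3 : ex_RInt chi 0 b) by (apply (ex_RInt_Chasles chi 0 a b); auto).
  assert (HR : RInt chi 0 b = RInt psi a b).
  { rewrite <- (RInt_Chasles chi 0 a b) by auto. unfold plus; simpl.
    rewrite (RInt_ext chi (fun _ => 0) 0 a).
    rewrite RInt_const. unfold scal; simpl; unfold mult; simpl. rewrite Rmult_0_r, Rplus_0_l.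
    apply RInt_ext. intros x Hx. rewrite Rmin_left, Rmax_right in Hx by auto.
    unfold chi. destruct (Rle_dec a x); auto; lra.
    intros x Hx. rewrite Rmin_left, Rmax_right in Hx by auto.
    unfold chi. destruct (Rle_dec a x); auto; lra. }
  pose (pr := ex_RInt_Reals_0 _ _ _ H3).
  rewrite <- HR. rewrite (RInt_Reals chi 0 b pr).
  apply HM. lra.
  destruct (Hadm a ltac:(lra)) as [j0 [q0 [Hj0 [Hq0 [Hn0 _]]]]].
  intros t r Ht Hr. apply HEG. lra. unfold chi in Hr. destruct (Rle_dec a t).
  - destruct (Hadm t ltac:(lra)) as [j [q [Hj [Hq [Hn Hle]]]]].
    exists j, q. repeat split; auto. lra.
  - exists j0, q0. repeat split; auto. generalize (Rabs_pos (f t j0 q0)). lra.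
Qed.

Lemma CONV N D f c M a (g : R -> R) : BND N D f c M -> 0 <= a -> (forall x, continuous g x) ->
  (forall t, a <= t -> adm N D f c t (Rabs (g t))) -> exists l, HL a g l.
Proof.
  intros HB Ha Hc Hadm.
  set (gp := fun t => Rmax (g t) 0). set (gm := fun t => Rmax (- g t) 0).
  assert (Cp : forall x, continuous gp x) by (intros; apply cmax0; auto).
  assert (Cm : forall x, continuous gm x).
  { intros; apply cmax0. apply (continuous_ext (fun t => 0 - g t)). intros; simpl; unfold Rminus; apply Rplus_0_l. apply cminus; auto. apply cconst. }
  assert (Ip : forall u v, ex_RInt gp u v) by (intros; apply exRc; auto).
  assert (Im : forall u v, ex_RInt gm u v) by (intros; apply exRc; auto).
  assert (Ig : forall u v, ex_RInt g u v) by (intros; apply exRc; auto).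
  assert (Hp0 : forall t, 0 <= gp t) by (intros; apply Rmax_r).
  assert (Hm0 : forall t, 0 <= gm t) by (intros; apply Rmax_r).
  assert (Hpa : forall t, gp t <= Rabs (g t)).
  { intros. unfold gp, Rmax. destruct (Rle_dec (g t) 0). apply Rabs_pos. apply RRle_abs. }
  assert (Hma : forall t, gm t <= Rabs (g t)).
  { intros. unfold gm, Rmax. destruct (Rle_dec (- g t) 0). apply Rabs_pos. rewrite <- Rabs_Ropp. apply RRle_abs. }
  assert (Mono : forall h, (forall t, 0 <= h t) -> (forall u v, ex_RInt h u v) ->
            forall T1 T2, a <= T1 -> T1 <= T2 -> RInt h a T1 <= RInt h a T2).
  { intros h H0 Hi T1 T2 H1 H2. rewrite <- (RInt_Chasles h a T1 T2) by auto. unfold plus; simpl.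
    assert (0 <= RInt h T1 T2) by (apply RInt_ge_0; auto). lra. }
  destruct (mono_lim (fun T => RInt gp a T) a M) as [lp Hlp].
  { apply Mono; auto. }
  { intros T HT. apply HB; auto. intros t Ht. apply (adm_le _ _ _ _ _ (Rabs (g t))); auto. apply Hadm; lra. }
  destruct (mono_lim (fun T => RInt gm a T) a M) as [lm Hlm].
  { apply Mono; auto. }
  { intros T HT. apply HB; auto. intros t Ht. apply (adm_le _ _ _ _ _ (Rabs (g t))); auto. apply Hadm; lra. }
  exists (lp - lm). intros e He.
  destruct (Hlp (e/2)) as [T1 HT1]; [lra|]. destruct (Hlm (e/2)) as [T2 HT2]; [lra|].
  exists (Rmax T1 T2). intros T HT.
  specialize (HT1 T ltac:(eapply Rle_trans; [apply Rmax_l|eauto])).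
  specialize (HT2 T ltac:(eapply Rle_trans; [apply Rmax_r|eauto])).
  rewrite RInt_Defs by auto.
  rewrite (RInt_ext g (fun t => gp t - gm t)).
  2:{ intros x _. unfold gp, gm, Rmax. destruct (Rle_dec (g x) 0), (Rle_dec (- g x) 0); lra. }
  rewrite (RInt_minus gp gm) by auto. unfold minus, plus, opp; simpl.
  replace (RInt gp a T + - RInt gm a T - (lp - lm)) with ((RInt gp a T - lp) - (RInt gm a T - lm)) by ring.
  eapply Rle_lt_trans. apply Rabs_triang. rewrite Rabs_Ropp. lra.
Qed.


Lemma Rmax_lip x y : Rabs (Rmax 0 x - Rmax 0 y) <= Rabs (x - y).
Proof.
  unfold Rmax. destruct (Rle_dec 0 x), (Rle_dec 0 y).
  - lra.
  - rewrite Rminus_0_r, Rabs_right by lra. rewrite Rabs_right; lra.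
  - rewrite Rminus_0_l, Rabs_Ropp, Rabs_right by lra. rewrite Rabs_left; lra.
  - rewrite Rminus_0_r, Rabs_R0. apply Rabs_pos.
Qed.

Lemma ft_cont N D f j q : condC N D f -> (j < N)%nat -> D j q ->
  forall x, continuous (fun t => f (Rmax 0 t) j q) x.
Proof.
  intros hC Hj Hq x. apply cont_pt.
  intros eps Heps. destruct (hC j q Hj Hq (Rmax 0 x) (Rmax_l _ _) eps Heps) as [d [Hd Hx]].
  exists d. split; auto. intros y [_ Hy]. simpl in *. unfold R_dist in *.
  apply Hx. apply Rmax_l. eapply Rle_lt_trans. apply Rmax_lip. auto.
Qed.

Definition phis (N : nat) (f : R -> nat -> (nat -> R) -> R) Qs t j := f (Rmax 0 t) j (row Qs j).
Definition zz N f Qs e k t := sumR N (fun j => trans N Qs (t - e) k j * phis N f Qs t j).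
Definition VV N f Qs e k := int_from e (zz N f Qs e k).

Lemma zz_cont N D f Qs e k : condC N D f -> inQ N D Qs -> forall x, continuous (zz N f Qs e k) x.
Proof.
  intros hC hQ x. unfold zz. apply csumR. intros j Hj. apply cmult.
  - apply (cshift (fun s => trans N Qs s k j)). apply cont_pt. apply trans_cont; auto.
  - unfold phis. apply (ft_cont N D f); auto.
Qed.

Definition cc N Qs := 1 + sumR N (fun j => norm1 N (row Qs j)).

Lemma norm1_ge0 N q : 0 <= norm1 N q.
Proof. unfold norm1. apply sumR_nonneg. intros; apply Rabs_pos. Qed.

Lemma cc_pos N Qs : 0 < cc N Qs.
Proof. unfold cc. assert (0 <= sumR N (fun j => norm1 N (row Qs j))) by (apply sumR_nonneg; intros; apply norm1_ge0). lra. Qed.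

Lemma cc_ge N Qs j : (j < N)%nat -> norm1 N (row Qs j) <= cc N Qs.
Proof.
  intros Hj. unfold cc. assert (norm1 N (row Qs j) <= sumR N (fun j => norm1 N (row Qs j))).
  apply (sumR_single_lt N (fun j => norm1 N (row Qs j))); auto. intros; apply norm1_ge0. lra.
Qed.

Lemma phis_adm N D f Qs t j : inQ N D Qs -> 0 <= t -> (j < N)%nat ->
  adm N D f (cc N Qs) t (Rabs (phis N f Qs t j)).
Proof.
  intros hQ Ht Hj. exists j, (row Qs j). repeat split; auto. apply cc_ge; auto.
  unfold phis. rewrite Rmax_right by auto. lra.
Qed.

Lemma stoch_bound N Q t k (v : nat -> R) : gen N Q -> 0 <= t -> (k < N)%nat ->
  exists j, (j < N)%nat /\ Rabs (sumR N (fun j => trans N Q t k j * v j)) <= Rabs (v j).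
Proof.
  intros HG Ht Hk. destruct (sumR_max N (fun j => Rabs (v j))) as [j0 [Hj0 Hm]]. lia.
  exists j0. split; auto. eapply Rle_trans. apply sumR_abs.
  rewrite <- (Rmult_1_l (Rabs (v j0))). rewrite <- (gen_trans_rowsum N Q t k HG Hk).
  rewrite <- sumR_scal_r. apply sumR_le. intros j Hj. rewrite Rabs_mult.
  rewrite (Rabs_right (trans _ _ _ _ _)) by (apply Rle_ge, gen_trans_nonneg; auto).
  apply Rmult_le_compat_l. apply gen_trans_nonneg; auto. apply Hm; auto.
Qed.

Lemma zz_adm N D f Qs e k t : (forall i q, (i < N)%nat -> D i q -> inE N i q) -> inQ N D Qs ->
  0 <= e -> e <= t -> (k < N)%nat -> adm N D f (cc N Qs) t (Rabs (zz N f Qs e k t)).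
Proof.
  intros hD hQ He Ht Hk.
  assert (HG : gen N Qs) by (intros m Hm; apply hD; auto).
  destruct (stoch_bound N Qs (t - e) k (phis N f Qs t) HG ltac:(lra) Hk) as [j [Hj Hb]].
  eapply adm_le. apply (phis_adm N D f Qs t j); auto. lra. exact Hb.
Qed.

Lemma zz_HL N D f Qs e k : (forall i q, (i < N)%nat -> D i q -> inE N i q) -> condC N D f -> condI N D f ->
  inQ N D Qs -> 0 <= e -> (k < N)%nat -> HL e (zz N f Qs e k) (VV N f Qs e k).
Proof.
  intros hD hC hI hQ He Hk.
  destruct (BOUND N D f (cc N Qs) hI (cc_pos N Qs)) as [M HM].
  destruct (CONV N D f (cc N Qs) M e (zz N f Qs e k) HM He (zz_cont N D f Qs e k hC hQ)) as [l Hl].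
  { intros t Ht. apply zz_adm; auto. }
  unfold VV. rewrite (int_from_HL _ _ _ Hl). auto.
Qed.

Lemma zz_int N D f Qs e k u v : condC N D f -> inQ N D Qs -> ex_RInt (zz N f Qs e k) u v.
Proof. intros. apply exRc. apply (zz_cont N D f); auto. Qed.

Lemma sum_zz_int N D f Qs e (c : nat -> R) u v : condC N D f -> inQ N D Qs ->
  ex_RInt (fun t => sumR N (fun k => c k * zz N f Qs e k t)) u v.
Proof.
  intros. apply exRc. intros x. apply csumR. intros k Hk. apply cmult. apply cconst. apply (zz_cont N D f); auto.
Qed.

Lemma Fval_V N D f Qs k : (forall i q, (i < N)%nat -> D i q -> inE N i q) -> condC N D f -> condI N D f ->
  inQ N D Qs -> (k < N)%nat -> Fval N f Qs k = VV N f Qs 0 k.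
Proof.
  intros hD hC hI hQ Hk. unfold Fval. apply int_from_HL.
  apply (HL_ext 0 _ (zz N f Qs 0 k)).
  - intros t Ht. unfold zz, phis. apply sumR_ext. intros j Hj. rewrite Rminus_0_r, Rmax_right by auto. auto.
  - intros; apply (zz_int N D f); auto.
  - apply (zz_HL N D f); auto. lra.
Qed.

Lemma decompV N D f Qs e i : (forall i q, (i < N)%nat -> D i q -> inE N i q) -> condC N D f -> condI N D f ->
  inQ N D Qs -> 0 <= e -> (i < N)%nat ->
  VV N f Qs 0 i = RInt (zz N f Qs 0 i) 0 e + sumR N (fun k => trans N Qs e i k * VV N f Qs e k).
Proof.
  intros hD hC hI hQ He Hi.
  assert (HG : gen N Qs) by (intros m Hm; apply hD; auto).
  assert (H1 := HL_split 0 e (zz N f Qs 0 i) (VV N f Qs 0 i) He (fun T => zz_int N D f Qs 0 i 0 T hC hQ)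
                 (zz_HL N D f Qs 0 i hD hC hI hQ ltac:(lra) Hi)).
  assert (H2 : HL e (fun t => sumR N (fun k => trans N Qs e i k * zz N f Qs e k t))
                    (sumR N (fun k => trans N Qs e i k * VV N f Qs e k))).
  { apply HL_sumR. intros; apply (zz_int N D f); auto. intros; apply (zz_HL N D f); auto. }
  assert (H3 : HL e (zz N f Qs 0 i) (sumR N (fun k => trans N Qs e i k * VV N f Qs e k))).
  { refine (HL_ext e _ _ _ _ _ H2).
    - intros t Ht. unfold zz.
      rewrite (sumR_ext N (fun k => trans N Qs e i k * sumR N (fun j => trans N Qs (t - e) k j * phis N f Qs t j))
                 (fun k => sumR N (fun j => trans N Qs e i k * trans N Qs (t - e) k j * phis N f Qs t j))).
      2:{ intros. rewrite <- sumR_scal. apply sumR_ext. intros; ring. }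
      rewrite sumR_swap. apply sumR_ext. intros j Hj.
      rewrite sumR_scal_r. rewrite <- trans_semigroup by auto. f_equal. f_equal. ring.
    - intros; apply (sum_zz_int N D f); auto. }
  pose proof (HL_unique _ _ _ _ H1 H3). lra.
Qed.

Lemma decompF N D f Q Qs e i : (forall i q, (i < N)%nat -> D i q -> inE N i q) -> condC N D f -> condI N D f ->
  inQ N D Qs -> inQ N D Q -> 0 < e -> (i < N)%nat ->
  Fcomp N f Q Qs e i = RInt (fun t => sumR N (fun j => trans N Q t i j * f (Rmax 0 t) j (row Q j))) 0 e
     + sumR N (fun k => trans N Q e i k * VV N f Qs e k).
Proof.
  intros hD hC hI hQs hQ He Hi. unfold Fcomp.
  set (uQ := fun t => sumR N (fun j => trans N Q t i j * f (Rmax 0 t) j (row Q j))).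
  assert (CuQ : forall x, continuous uQ x).
  { intros x. unfold uQ. apply csumR. intros j Hj. apply cmult. apply cont_pt, trans_cont; auto.
    apply (ft_cont N D f); auto. }
  assert (Ext : forall x, Rmin 0 e < x < Rmax 0 e -> uQ x = sumR N (fun j => trans N Q x i j * f x j (row Q j))).
  { intros x Hx. rewrite Rmin_left, Rmax_right in Hx by lra. unfold uQ. apply sumR_ext. intros.
    rewrite Rmax_right by lra. auto. }
  rewrite RInt_Defs.
  2:{ apply (ex_RInt_ext uQ); auto. apply exRc; auto. }
  rewrite <- (RInt_ext uQ) by auto. f_equal.
  apply int_from_HL.
  assert (HG : gen N Qs) by (intros m Hm; apply hD; auto).
  apply (HL_ext e _ (fun t => sumR N (fun k => trans N Q e i k * zz N f Qs e k t))).
  - intros t Ht. unfold zz, phis.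
    rewrite (sumR_ext N (fun k => trans N Q e i k * sumR N (fun j => trans N Qs (t - e) k j * f (Rmax 0 t) j (row Qs j)))
                 (fun k => sumR N (fun j => trans N Q e i k * trans N Qs (t - e) k j * f t j (row Qs j)))).
    2:{ intros. rewrite <- sumR_scal. apply sumR_ext. intros. rewrite Rmax_right by lra. ring. }
    rewrite sumR_swap. apply sumR_ext. intros j Hj. rewrite sumR_scal_r. auto.
  - intros; apply (sum_zz_int N D f); auto.
  - apply HL_sumR. intros; apply (zz_int N D f); auto. intros; apply (zz_HL N D f); auto. lra.
Qed.

Lemma RInt_abs_dom (g h : R -> R) a b : a <= b -> (forall x, continuous g x) -> (forall x, continuous h x) ->
  (forall x, a < x < b -> Rabs (g x) <= h x) -> Rabs (RInt g a b) <= RInt h a b.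
Proof.
  intros Hab Cg Ch Hd. eapply Rle_trans. apply abs_RInt_le; auto. apply exRc; auto.
  apply RInt_le; auto. apply exRc; intros; apply cabs; auto. apply exRc; auto.
Qed.

Definition eta N Qs e k := sumR N (fun l => Rabs (trans N Qs e k l - delta k l)).

Lemma eta_ge0 N Qs e k : 0 <= eta N Qs e k.
Proof. apply sumR_nonneg; intros; apply Rabs_pos. Qed.

Lemma zz_diff N D f Qs e k t : (forall i q, (i < N)%nat -> D i q -> inE N i q) -> inQ N D Qs ->
  0 <= e -> e <= t -> (k < N)%nat ->
  Rabs (zz N f Qs e k t - zz N f Qs 0 k t) <= eta N Qs e k * sumR N (fun j => Rabs (phis N f Qs t j)).
Proof.
  intros hD hQ He Ht Hk.
  assert (HG : gen N Qs) by (intros m Hm; apply hD; auto).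
  unfold zz. rewrite <- sumR_minus.
  rewrite (sumR_ext N _ (fun j => sumR N (fun l => (delta k l - trans N Qs e k l) * trans N Qs (t - e) l j) * phis N f Qs t j)).
  2:{ intros j Hj. rewrite <- Rmult_minus_distr_r. f_equal.
      replace (t - 0) with (e + (t - e)) by ring. rewrite trans_semigroup by auto.
      rewrite (sumR_ext N (fun l => (delta k l - trans N Qs e k l) * trans N Qs (t - e) l j)
        (fun l => delta k l * trans N Qs (t - e) l j - trans N Qs e k l * trans N Qs (t - e) l j)) by (intros; ring).
      rewrite sumR_minus. f_equal. unfold delta. rewrite (sumR_delta_l N (fun l => trans N Qs (t - e) l j)); auto. }
  eapply Rle_trans. apply sumR_abs. rewrite <- sumR_scal. apply sumR_le. intros j Hj.
  rewrite Rabs_mult. apply Rmult_le_compat_r. apply Rabs_pos.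
  eapply Rle_trans. apply sumR_abs. unfold eta. apply sumR_le. intros l Hl.
  rewrite Rabs_mult. rewrite <- Rabs_Ropp, Ropp_minus_distr.
  rewrite <- (Rmult_1_r (Rabs (trans N Qs e k l - delta k l))) at 2.
  apply Rmult_le_compat_l. apply Rabs_pos.
  rewrite Rabs_right. apply gen_trans_le1; auto; lra. apply Rle_ge, gen_trans_nonneg; auto; lra.
Qed.

Lemma V_bound N D f Qs M e k : (forall i q, (i < N)%nat -> D i q -> inE N i q) -> condC N D f -> condI N D f ->
  inQ N D Qs -> BND N D f (cc N Qs) M -> 0 < e -> (k < N)%nat ->
  Rabs (VV N f Qs e k - VV N f Qs 0 k) <= Rabs (RInt (zz N f Qs 0 k) 0 e) + eta N Qs e k * sumR N (fun _ => M).
Proof.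
  intros hD hC hI hQ HM He Hk.
  assert (H1 := HL_split 0 e (zz N f Qs 0 k) (VV N f Qs 0 k) ltac:(lra) (fun T => zz_int N D f Qs 0 k 0 T hC hQ)
                 (zz_HL N D f Qs 0 k hD hC hI hQ ltac:(lra) Hk)).
  assert (H2 := zz_HL N D f Qs e k hD hC hI hQ ltac:(lra) Hk).
  assert (H3 := HL_diff_bound e _ _ _ _ (eta N Qs e k * sumR N (fun _ => M)) H2 H1).
  assert (Rabs (VV N f Qs e k - (VV N f Qs 0 k - RInt (zz N f Qs 0 k) 0 e)) <= eta N Qs e k * sumR N (fun _ => M)).
  { apply H3. exists e. intros T HT.
    rewrite !RInt_Defs by (apply (zz_int N D f); auto).
    rewrite <- (RInt_minus (zz N f Qs e k) (zz N f Qs 0 k)) by (apply (zz_int N D f); auto).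
    eapply Rle_trans. apply (RInt_abs_dom _ (fun t => eta N Qs e k * sumR N (fun j => Rabs (phis N f Qs t j)))); auto.
    - intros x. apply (cminus (zz N f Qs e k) (zz N f Qs 0 k)); apply (zz_cont N D f); auto.
    - intros x. apply cmult. apply cconst. apply csumR. intros j Hj. apply cabs. unfold phis. apply (ft_cont N D f); auto.
    - intros x Hx. apply (zz_diff N D f); auto; lra.
    - assert (Hi : forall j, (j < N)%nat -> ex_RInt (fun t => Rabs (phis N f Qs t j)) e T).
      { intros j Hj. apply exRc. intros. apply cabs. unfold phis. apply (ft_cont N D f); auto. }
      rewrite (RInt_scal (fun t => sumR N (fun j => Rabs (phis N f Qs t j)))) by (apply ex_RInt_sumR; auto).
      unfold scal; simpl; unfold mult; simpl.
      apply Rmult_le_compat_l. apply eta_ge0.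
      rewrite (RInt_sumR N (fun j t => Rabs (phis N f Qs t j))) by auto.
      apply sumR_le. intros j Hj. apply HM; auto. lra.
      intros t Ht. apply (phis_adm N D f); auto. lra. }
  eapply Rle_trans. 2:{ apply Rplus_le_compat_l. exact H. }
  replace (VV N f Qs e k - VV N f Qs 0 k) with (- RInt (zz N f Qs 0 k) 0 e + (VV N f Qs e k - (VV N f Qs 0 k - RInt (zz N f Qs 0 k) 0 e))) by ring.
  eapply Rle_trans. apply Rabs_triang. rewrite Rabs_Ropp. lra.
Qed.

Lemma lim0_squeeze g l h : (forall x, 0 < x -> Rabs (g x - l) <= h x) -> lim0 h 0 -> lim0 g l.
Proof.
  intros Hb H e He. destruct (H e He) as [d [Hd Hx]]. exists d. split; auto. intros x Hx'.
  specialize (Hx x Hx'). specialize (Hb x ltac:(lra)). rewrite Rminus_0_r in Hx.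
  eapply Rle_lt_trans. apply Hb. eapply Rle_lt_trans. apply RRle_abs. auto.
Qed.

Lemma lim0_abs g : lim0 g 0 -> lim0 (fun x => Rabs (g x)) 0.
Proof.
  intros H e He. destruct (H e He) as [d [Hd Hx]]. exists d. split; auto. intros x Hx'.
  specialize (Hx x Hx'). rewrite Rminus_0_r in *. rewrite Rabs_Rabsolu. auto.
Qed.

Lemma lim0_RInt0 (u : R -> R) : (forall x, continuous u x) -> lim0 (fun x => RInt u 0 x) 0.
Proof.
  intros Hc. apply (lim0_ext (fun x => x * (RInt u 0 x / x))).
  intros x Hx. field. lra.
  apply (lim0_leq _ (0 * u 0)); [ring|]. apply lim0_mult. apply lim0_id. apply lim0_RInt; auto.
Qed.

Lemma lim0_trans N Q k l : (l < N)%nat -> lim0 (fun e => trans N Q e k l) (delta k l).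
Proof.
  intros Hl e He. destruct (trans_cont N Q k l 0 Hl e He) as [d [Hd Hx]].
  exists d. split; auto. intros x Hx'. rewrite <- (trans_0 N Q k l Hl).
  apply (Hx x). split. split. exact I. apply Rlt_not_eq; lra. simpl. unfold R_dist. rewrite Rminus_0_r, Rabs_right; lra.
Qed.

Lemma eta_lim N Qs k : lim0 (fun e => eta N Qs e k) 0.
Proof.
  unfold eta. rewrite <- (sumR_zero N). apply lim0_sumR. intros l Hl. apply lim0_abs.
  apply (lim0_leq _ (delta k l - delta k l)); [ring|]. apply lim0_minus. apply lim0_trans; auto. apply lim0_const.
Qed.

Lemma V_lim N D f Qs k : (forall i q, (i < N)%nat -> D i q -> inE N i q) -> condC N D f -> condI N D f ->
  inQ N D Qs -> (k < N)%nat -> lim0 (fun e => VV N f Qs e k) (VV N f Qs 0 k).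
Proof.
  intros hD hC hI hQ Hk.
  destruct (BOUND N D f (cc N Qs) hI (cc_pos N Qs)) as [M HM].
  apply (lim0_squeeze _ _ (fun e => Rabs (RInt (zz N f Qs 0 k) 0 e) + eta N Qs e k * sumR N (fun _ => M))).
  intros x Hx. apply (V_bound N D f); auto.
  apply (lim0_leq _ (0 + 0 * sumR N (fun _ => M))); [ring|].
  apply lim0_plus. apply lim0_abs. apply lim0_RInt0. apply (zz_cont N D f); auto.
  apply lim0_mult. apply eta_lim. apply lim0_const.
Qed.

Lemma trans_dlim N Q i k : (i < N)%nat -> (k < N)%nat ->
  lim0 (fun e => (trans N Q e i k - delta i k) / e) (Q i k).
Proof.
  intros Hi Hk. apply (lim0_ext (fun e => (trans N Q e i k - trans N Q 0 i k) / e)).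
  intros; rewrite trans_0; auto.
  apply (lim0_deriv (fun s => trans N Q s i k)). apply trans_deriv0; auto.
Qed.

Lemma main_lim N D f Qs Q i : (forall i q, (i < N)%nat -> D i q -> inE N i q) -> condC N D f -> condI N D f ->
  inQ N D Qs -> inQ N D Q -> (i < N)%nat ->
  lim0 (fun e => (Fval N f Qs i - Fcomp N f Q Qs e i) / e)
       (Gamma N f Qs i (row Qs i) - Gamma N f Qs i (row Q i)).
Proof.
  intros hD hC hI hQs hQ Hi.
  set (uS := zz N f Qs 0 i).
  set (uQ := fun t => sumR N (fun j => trans N Q t i j * f (Rmax 0 t) j (row Q j))).
  assert (CuQ : forall x, continuous uQ x).
  { intros x. unfold uQ. apply csumR. intros j Hj. apply cmult. apply cont_pt, trans_cont; auto.
    apply (ft_cont N D f); auto. }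
  assert (CuS : forall x, continuous uS x) by (apply (zz_cont N D f); auto).
  apply (lim0_ext (fun e => (RInt uS 0 e / e - RInt uQ 0 e / e) +
      sumR N (fun k => ((trans N Qs e i k - delta i k) / e - (trans N Q e i k - delta i k) / e) * VV N f Qs e k))).
  { intros e He. rewrite (Fval_V N D f) by auto. rewrite (decompV N D f Qs e i) by (auto; lra).
    rewrite (decompF N D f Q Qs e i) by auto. fold uQ. fold uS.
    rewrite (sumR_ext N _ (fun k => / e * (trans N Qs e i k * VV N f Qs e k - trans N Q e i k * VV N f Qs e k))).
    2:{ intros. field. lra. }
    rewrite sumR_scal, sumR_minus. field. lra. }
  apply (lim0_leq _ ((uS 0 - uQ 0) + sumR N (fun k => (Qs i k - Q i k) * VV N f Qs 0 k))).
  2:{ apply lim0_plus. apply lim0_minus; apply lim0_RInt; auto.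
      apply lim0_sumR. intros k Hk. apply lim0_mult. apply lim0_minus; apply trans_dlim; auto.
      apply (V_lim N D f); auto. }
  unfold Gamma, uS, uQ, zz, phis. rewrite Rminus_0_r.
  rewrite (sumR_ext N (fun j => trans N Qs 0 i j * f (Rmax 0 0) j (row Qs j))
                      (fun j => delta i j * f (Rmax 0 0) j (row Qs j))) by (intros; rewrite trans_0; auto).
  rewrite (sumR_ext N (fun j => trans N Q 0 i j * f (Rmax 0 0) j (row Q j))
                      (fun j => delta i j * f (Rmax 0 0) j (row Q j))) by (intros; rewrite trans_0; auto).
  unfold delta. rewrite (sumR_delta_l N (fun j => f (Rmax 0 0) j (row Qs j))) by auto.
  rewrite (sumR_delta_l N (fun j => f (Rmax 0 0) j (row Q j))) by auto.
  rewrite Rmax_left by lra.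
  rewrite (sumR_ext N (fun k => (Qs i k - Q i k) * VV N f Qs 0 k)
      (fun k => row Qs i k * Fval N f Qs k - row Q i k * Fval N f Qs k)).
  2:{ intros k Hk. rewrite (Fval_V N D f) by auto. unfold row. ring. }
  rewrite sumR_minus. ring.
Qed.

Theorem mainTheorem2 (N : nat) (D : nat -> (nat -> R) -> Prop)
  (f : R -> nat -> (nat -> R) -> R)
  (hD : forall i q, (i < N)%nat -> D i q -> inE N i q)
  (hC : condC N D f) (hI : condI N D f) (hH : condH N D f)
  (Qs : nat -> nat -> R) (hQs : inQ N D Qs) :
  weak_equilibrium N D f Qs <->
  (forall i Q, (i < N)%nat -> inQ N D Q ->
     Gamma N f Qs i (row Q i) <= Gamma N f Qs i (row Qs i)).
Proof.
  split.
  - intros WE i Q Hi hQ.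
    pose proof (main_lim N D f Qs Q i hD hC hI hQs hQ Hi) as HL0.
    set (g := Gamma N f Qs i (row Qs i) - Gamma N f Qs i (row Q i)) in *.
    apply Rnot_lt_le. intros Hc.
    assert (Hg : g < 0) by (unfold g; lra).
    destruct (WE Q i hQ Hi (- g / 2)) as [et [Het Hw]]. lra.
    destruct (HL0 (- g / 2)) as [d [Hd Hx]]. lra.
    set (x := Rmin et d / 2).
    assert (Hm : 0 < Rmin et d) by (apply Rmin_pos; auto).
    assert (x < et) by (unfold x; generalize (Rmin_l et d); lra).
    assert (x < d) by (unfold x; generalize (Rmin_r et d); lra).
    assert (Hx0 : 0 < x) by (unfold x; lra).
    specialize (Hw x ltac:(split; auto)). specialize (Hx x ltac:(split; auto)).
    apply Rabs_def2 in Hx. lra.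
  - intros H Q i hQ Hi delta0 Hd.
    pose proof (main_lim N D f Qs Q i hD hC hI hQs hQ Hi) as HL0.
    specialize (H i Q Hi hQ).
    destruct (HL0 delta0 Hd) as [d [Hd' Hx]]. exists d. split; auto.
    intros x Hx'. specialize (Hx x Hx'). apply Rabs_def2 in Hx. lra.
Qed.
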